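(* Consider the two-layer multi-item order fulfillment problem described in the context with $K\ge 2$ FDCs and any given fixed costs $f_0,f_1,\dots,f_K\ge 0$, and let constants $b>a>0$ bound the variable costs, $a\le c_{k,t}^i\le b$. Then every online fulfillment policy $\mathrm{ALG}$ (deterministic or randomized) satisfies \[\mathfrak{R}(\mathrm{ALG})\ge \max\left\{1,\ \frac{b}{4a},\ \frac14\max_{n\ge 2}\min\left\{n,\ \frac{f_0}{\min_{k\in[K]}f_k+na}\right\}\right\},\] where the inner maximum is over integers $n\ge 2$.
   Context: Problem. There are $n$ items, $K$ front distribution centers (FDCs) indexed by $k\in[K]$, and one regional distribution center (RDC) indexed by $k=0$ with unlimited inventory of every item. FDC $k$ initially holds $I_{k,0}^i\ge 0$ units of item $i$, never replenished. In each period $t=1,\dots,T$ an order $\boldsymbol S_t=(S_t^i)_{i}$ of nonnegative integers arrives; after observing $\boldsymbol S_t$ and the variable costs $c_{k,t}^i$, a policy must immediately and irrevocably choose $m_{k,t}^i\ge 0$ with $\sum_{k=0}^K m_{k,t}^i=S_t^i$ and $m_{k,t}^i\le I_{k,t-1}^i$ ($k\in[K]$), where $I_{k,t}^i=I_{k,0}^i-\sum_{\tau\le t}m_{k,\tau}^i$. Period cost: $\sum_{k=0}^K[f_k\mathbb{I}(\sum_i m_{k,t}^i>0)+\sum_i c_{k,t}^i m_{k,t}^i]$; total cost is the sum over periods. An online policy (possibly randomized) decides in period $t$ using only fixed costs, initial inventories, and orders and variable costs up to period $t$. For an instance $I$ (choice of $n,T$, inventories, variable costs, orders), $\mathrm{ALG}(I)$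 is the (expected) total cost of the policy and $\mathrm{OPT}(I)$ the optimal total cost with full knowledge of $I$. The competitive ratio $\mathfrak R(\mathrm{ALG})$ is the supremum of $\mathrm{ALG}(I)/\mathrm{OPT}(I)$ over all $n,T$, initial inventories, variable costs in $[a,b]$ and order sequences. *)

(* Defs.v *)
From HB Require Import structures.
From mathcomp Require Import all_boot all_order all_algebra.
From mathcomp Require Import all_classical all_reals all_analysis.
From mathcomp Require Import measurable_realfun.
Set Implicit Arguments. Unset Strict Implicit. Unset Printing Implicit Defensive.
Import Order.TTheory GRing.Theory Num.Theory.
Local Open Scope ring_scope.
Local Open Scope classical_set_scope.

(* Facilities are indexed by 'I_K.+1 : index 0 is the RDC, 1..K the FDCs.
   Items are indexed by 'I_n. *)

(* Data revealed in one period: the order S_t and the variable costs c_{.,t}. *)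
Definition period_data (R : realType) (K n : nat) : Type :=
  ({ffun 'I_n -> nat} * {ffun 'I_K.+1 -> {ffun 'I_n -> R}})%type.

(* A decision (m_{k,t}^i)_{k,i}; also used for inventory vectors
   (the entry for k = 0, the RDC, is ignored since its inventory is unlimited). *)
Definition decision (K n : nat) : Type := {ffun 'I_K.+1 -> {ffun 'I_n -> nat}}.

(* An instance: number of items n, initial inventories I_{k,0}^i, and the
   sequence of periods t = 1..T (T = size of the list) with orders and costs. *)
Record instance (R : realType) (K : nat) := Instance {
  inst_n : nat;
  inst_inv0 : decision K inst_n;
  inst_periods : seq (period_data R K inst_n) }.

(* A deterministic online policy: in period t it sees the number of items,
   the initial inventories and the history of orders and variable costs of
   periods 1..t (last element = current period), and outputs m_{.,t}.
   (Fixed costs are parameters of the problem, hence known to the policy.) *)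
Definition policy (R : realType) (K : nat) : Type :=
  forall n : nat, decision K n -> seq (period_data R K n) -> decision K n.

Section Model.
Variables (R : realType) (K : nat).

Definition run (pol : policy R K) (I : instance R K) : seq (decision K (inst_n I)) :=
  [seq pol (inst_n I) (inst_inv0 I) (take t.+1 (inst_periods I))
     | t <- iota 0 (size (inst_periods I))].

Fixpoint feasible_from (n : nat) (inv : decision K n)
    (ps : seq (period_data R K n)) (plan : seq (decision K n)) : bool :=
  match ps, plan with
  | [::], [::] => true
  | p :: ps', m :: plan' =>
      [forall i : 'I_n, (\sum_(k < K.+1) m k i)%N == p.1 i]
      && [forall k : 'I_K.+1, forall i : 'I_n, (0 < k)%N ==> (m k i <= inv k i)%N]
      && feasible_from [ffun k => [ffun i => (inv k i - m k i)%N]] ps' plan'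
  | _, _ => false
  end.

Unset Implicit Arguments.
Definition feasible (I : instance R K) (plan : seq (decision K (inst_n I))) : bool :=
  feasible_from (inst_inv0 I) (inst_periods I) plan.

Definition period_cost (f : nat -> R) (n : nat) (c : {ffun 'I_K.+1 -> {ffun 'I_n -> R}})
    (m : decision K n) : R :=
  \sum_(k < K.+1) ((if (0 < \sum_(i < n) m k i)%N then f k else 0)
                   + \sum_(i < n) c k i * (m k i)%:R).

Definition plan_cost (f : nat -> R) (I : instance R K)
    (plan : seq (decision K (inst_n I))) : R :=
  \sum_(x <- zip (inst_periods I) plan) period_cost f (inst_n I) x.1.2 x.2.

Set Implicit Arguments.

Definition valid_instance (a b : R) (I : instance R K) : bool :=
  all (fun p : period_data R K (inst_n I) =>
         [forall k : 'I_K.+1, forall i : 'I_(inst_n I), (a <= p.2 k i) && (p.2 k i <= b)])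
      (inst_periods I).

Definition feasible_policy (a b : R) (pol : policy R K) : Prop :=
  forall I, valid_instance a b I -> feasible I (run pol I).

Definition OPT (f : nat -> R) (I : instance R K) : \bar R :=
  ereal_inf [set (plan_cost f I p)%:E | p in [set p : seq (decision K (inst_n I)) | feasible I p]].

(* Randomized policy: a random variable w |-> pol w over a probability space;
   ALG(I) = expected total cost. *)
Definition ALG (f : nat -> R) (d : measure_display) (Omega : measurableType d)
    (P : probability Omega R) (pol : Omega -> policy R K) (I : instance R K) : \bar R :=
  (\int[P]_w (plan_cost f I (run (pol w) I))%:E)%E.

Definition comp_ratio (f : nat -> R) (a b : R) (d : measure_display)
    (Omega : measurableType d) (P : probability Omega R) (pol : Omega -> policy R K) : \bar R :=
  ereal_sup [set (ALG f P pol I * ((fine (OPT f I))^-1)%:E)%E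
            | I in [set I | valid_instance a b I /\ (0 < OPT f I)%E]].

Definition lower_bound (f : nat -> R) (a b : R) : R :=
  let fmin := \big[Num.min/f 1%N]_(1 <= k < K.+1) f k in
  Num.max 1 (Num.max (b / (4 * a))
    (4^-1 * sup [set Num.min (n%:R) (f 0%N / (fmin + n%:R * a)) | n in [set n : nat | (2 <= n)%N]])).

End Model.

Arguments feasible {R K}.
Arguments plan_cost {R K}.

(* Main.v *)
Require Import Defs.
From HB Require Import structures.
From mathcomp Require Import all_boot all_order all_algebra.
From mathcomp Require Import all_classical all_reals all_analysis.
From mathcomp Require Import measurable_realfun.
From mathcomp Require Import zify.
From mathcomp.algebra_tactics Require Import ring lra.
Import Order.TTheory GRing.Theory Num.Theory.
Local Open Scope ring_scope.
Local Open Scope classical_set_scope.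
Set Implicit Arguments. Unset Strict Implicit. Unset Printing Implicit Defensive.
Definition cost_list (R : realType) (K : nat) (f : nat -> R) (n : nat)
  (ps : seq (period_data R K n)) (plan : seq (decision K n)) : R :=
  \sum_(x <- zip ps plan) period_cost _ _ f n x.1.2 x.2.

Definition cnn (R : realType) (K n : nat) (p : period_data R K n) : bool :=
  [forall k, forall i, 0 <= p.2 k i].

Lemma cost_list_cons (R : realType) (K : nat) (f : nat -> R) n p ps m ms :
  @cost_list R K f n (p :: ps) (m :: ms) = period_cost _ _ f n p.2 m + cost_list f ps ms.
Proof. by rewrite /cost_list /= big_cons. Qed.

Lemma cost_list_nil (R : realType) (K : nat) (f : nat -> R) n ms :
  @cost_list R K f n [::] ms = 0.
Proof. by rewrite /cost_list; case: ms => [|? ?]; rewrite /= big_nil. Qed.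

Lemma period_cost_ge0 (R : realType) (K : nat) (f : nat -> R) n (c : {ffun 'I_K.+1 -> {ffun 'I_n -> R}}) (m : decision K n) :
  (forall k : 'I_K.+1, 0 <= f k) -> (forall k i, 0 <= c k i) ->
  0 <= period_cost _ _ f n c m.
Proof.
move=> hf hc; rewrite /period_cost; apply: sumr_ge0 => k _; apply: addr_ge0.
  by case: ifP.
by apply: sumr_ge0 => i _; apply: mulr_ge0.
Qed.

Lemma period_cost_fixed (R : realType) (K : nat) (f : nat -> R) n (c : {ffun 'I_K.+1 -> {ffun 'I_n -> R}}) (m : decision K n) (k0 : 'I_K.+1) :
  (forall k : 'I_K.+1, 0 <= f k) -> (forall k i, 0 <= c k i) ->
  (0 < \sum_(i < n) m k0 i)%N -> f k0 <= period_cost _ _ f n c m.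
Proof.
move=> hf hc hp; rewrite /period_cost (bigD1 k0) //= hp -addrA lerDl.
apply: addr_ge0; first by apply: sumr_ge0 => i _; apply: mulr_ge0.
apply: sumr_ge0 => k _; apply: addr_ge0; first by case: ifP.
by apply: sumr_ge0 => i _; apply: mulr_ge0.
Qed.

Lemma period_cost_var (R : realType) (K : nat) (f : nat -> R) n (c : {ffun 'I_K.+1 -> {ffun 'I_n -> R}}) (m : decision K n) :
  (forall k : 'I_K.+1, 0 <= f k) ->
  \sum_(k < K.+1) \sum_(i < n) c k i * (m k i)%:R <= period_cost _ _ f n c m.
Proof.
move=> hf; rewrite /period_cost; apply: ler_sum => k _; rewrite lerDr.
by case: ifP.
Qed.

Lemma cost_list_ge0 (R : realType) (K : nat) (f : nat -> R) n ps ms :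
  (forall k : 'I_K.+1, 0 <= f k) -> all (@cnn R K n) ps -> 0 <= cost_list f ps ms.
Proof.
move=> hf; elim: ps ms => [|p ps IH] [|m ms] //=; rewrite ?cost_list_nil //.
  by rewrite /cost_list /= big_nil.
move=> /andP [hp hps]; rewrite cost_list_cons; apply: addr_ge0; last exact: IH.
apply: period_cost_ge0 => // k i; by move/forallP: hp => /(_ k) /forallP /(_ i).
Qed.

Lemma feasible_cons (R : realType) (K n : nat) (inv : decision K n) p ps plan :
  @feasible_from R K n inv (p :: ps) plan ->
  exists m plan', [/\ plan = m :: plan',
    (forall i, (\sum_(k < K.+1) m k i)%N = p.1 i),
    (forall (k : 'I_K.+1) (i : 'I_n), (0 < k)%N -> (m k i <= inv k i)%N) &
    feasible_from [ffun k => [ffun i => (inv k i - m k i)%N]] ps plan'].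
Proof.
case: plan => [|m plan'] //= /andP [/andP [/forallP H1 /forallP H2] H3].
exists m, plan'; split => //.
  by move=> i; apply/eqP/H1.
by move=> k i kp; move/forallP: (H2 k) => /(_ i); rewrite kp.
Qed.

Lemma zero_inv_cost (R : realType) (K : nat) (f : nat -> R) n
    (inv : decision K n) ps plan :
  (forall k : 'I_K.+1, 0 <= f k) ->
  (forall (k : 'I_K.+1) (i : 'I_n), (0 < k)%N -> inv k i = 0%N) -> all (@cnn R K n) ps ->
  feasible_from inv ps plan ->
  f 0%N * (count (fun p : period_data R K n => (0 < \sum_(i < n) p.1 i)%N) ps)%:R
    <= cost_list f ps plan.
Proof.
move=> hf; elim: ps inv plan => [|p ps IH] inv plan hinv.
  by move=> _ _; rewrite /= mulr0 cost_list_nil.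
move=> /= /andP [hp hps] /feasible_cons [m [plan' [-> hsum hle hfe]]].
have m0 : forall (k : 'I_K.+1) (i : 'I_n), (0 < k)%N -> m k i = 0%N.
  by move=> k i kp; have := hle k i kp; rewrite hinv //; lia.
have hm0 : forall i, m ord0 i = p.1 i.
  move=> i; rewrite -hsum (bigD1 ord0) //= big1 ?addn0 // => k kne.
  by apply: m0; rewrite lt0n; apply: contra kne => /eqP k0; apply/eqP/val_inj.
rewrite cost_list_cons natrD mulrDr; apply: lerD; last first.
  apply: (IH _ _ _ hps hfe) => k i kp; rewrite !ffunE hinv //.
have hc : forall k i, 0 <= p.2 k i by move=> k i; move/forallP: hp => /(_ k) /forallP /(_ i).
have [hpos|hpos] := boolP (0 < \sum_(i < n) p.1 i)%N; rewrite ?hpos /=; last first.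
  by rewrite mulr0; apply: period_cost_ge0.
rewrite mulr1; apply: (period_cost_fixed (k0 := ord0)) => //.
by under eq_bigr do rewrite hm0.
Qed.

Lemma feasible_suff (R : realType) (K n : nat) (inv : decision K n) ps plan :
  size ps = size plan ->
  all (fun x : period_data R K n * decision K n =>
         [forall i, (\sum_(k < K.+1) x.2 k i)%N == x.1.1 i]) (zip ps plan) ->
  (forall (k : 'I_K.+1) (i : 'I_n), (0 < k)%N -> (\sum_(m <- plan) m k i <= inv k i)%N) ->
  feasible_from inv ps plan.
Proof.
elim: ps inv plan => [|p ps IH] inv [|m plan] //= [hs] /andP [h1 h2] h3.
rewrite h1 /=; apply/andP; split.
  apply/forallP => k; apply/forallP => i; apply/implyP => kp.
  by have := h3 k i kp; rewrite big_cons; lia.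
apply: IH => // k i kp; rewrite !ffunE; have := h3 k i kp; rewrite big_cons; lia.
Qed.

Lemma run_cons (R : realType) (K : nat) (pol : policy R K) n inv p ps :
  exists rest, run pol (@Instance R K n inv (p :: ps)) = pol n inv [:: p] :: rest.
Proof. by eexists; rewrite /run /= take0. Qed.

Lemma OPT_le (R : realType) (K : nat) (f : nat -> R) (I : instance R K) plan :
  feasible I plan -> (OPT f I <= (plan_cost f I plan)%:E)%E.
Proof. by move=> h; apply: ereal_inf_lbound; exists plan. Qed.

Lemma OPT_ge (R : realType) (K : nat) (f : nat -> R) (I : instance R K) r :
  (forall plan, feasible I plan -> r <= plan_cost f I plan) -> (r%:E <= OPT f I)%E.
Proof. by move=> h; apply/ereal_infP => _ [p Hp <-]; rewrite lee_fin; apply: h. Qed.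

Lemma first_var (R : realType) (K : nat) (f : nat -> R) n (inv : decision K n) p ps plan (a : R) :
  (forall k : 'I_K.+1, 0 <= f k) -> feasible_from inv (p :: ps) plan ->
  all (@cnn R K n) ps -> (forall k i, a <= p.2 k i) ->
  a * (\sum_(i < n) p.1 i)%:R <= cost_list f (p :: ps) plan.
Proof.
move=> hf /feasible_cons [m [plan' [-> hsum _ _]]] hps ha.
rewrite cost_list_cons -[X in X <= _]addr0; apply: lerD; last exact: cost_list_ge0.
apply: le_trans; last exact: period_cost_var.
rewrite natr_sum mulr_sumr exchange_big /=; apply: ler_sum => i _.
rewrite -hsum natr_sum mulr_sumr; apply: ler_sum => k _.
by apply: ler_wpM2r => //.
Qed.

Lemma combine (R : realType) (K : nat) (f : nat -> R) (a b : R)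
  (d : measure_display) (Omega : measurableType d) (P : probability Omega R)
  (pol : Omega -> policy R K) (I1 I2 : instance R K) (o1 o2 D1 D2 L : R) :
  valid_instance a b I1 -> valid_instance a b I2 ->
  OPT f I1 = o1%:E -> OPT f I2 = o2%:E ->
  0 < o1 -> o1 <= D1 -> 0 < o2 -> o2 <= D2 ->
  measurable_fun [set: Omega] (fun w => (plan_cost f I1 (run (pol w) I1))%:E) ->
  measurable_fun [set: Omega] (fun w => (plan_cost f I2 (run (pol w) I2))%:E) ->
  (forall w, 0 <= plan_cost f I1 (run (pol w) I1)) ->
  (forall w, 0 <= plan_cost f I2 (run (pol w) I2)) ->
  (forall w, 2 * L <= plan_cost f I1 (run (pol w) I1) / D1
                     + plan_cost f I2 (run (pol w) I2) / D2) ->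
  (L%:E <= comp_ratio f a b P pol)%E.
Proof.
move=> v1 v2 e1 e2 o1p o1D o2p o2D m1 m2 c1p c2p hw.
have A1ge : (0 <= ALG f P pol I1)%E.
  by apply: integral_ge0 => w _; rewrite lee_fin.
have A2ge : (0 <= ALG f P pol I2)%E.
  by apply: integral_ge0 => w _; rewrite lee_fin.
have ub1 : (ALG f P pol I1 * (o1^-1)%:E <= comp_ratio f a b P pol)%E.
  apply: ereal_sup_ubound; exists I1; first by split => //; rewrite e1 lte_fin.
  by rewrite e1.
have ub2 : (ALG f P pol I2 * (o2^-1)%:E <= comp_ratio f a b P pol)%E.
  apply: ereal_sup_ubound; exists I2; first by split => //; rewrite e2 lte_fin.
  by rewrite e2.
have [L0|Lp] := leP L 0.
  apply: le_trans ub1; apply: le_trans (mule_ge0 A1ge _); first by rewrite lee_fin.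
  by rewrite lee_fin invr_ge0 ltW.
have D1p : 0 < D1 by apply: lt_le_trans o1D.
have D2p : 0 < D2 by apply: lt_le_trans o2D.
have key : ((2 * L)%:E <= (D1^-1)%:E * ALG f P pol I1 + (D2^-1)%:E * ALG f P pol I2)%E.
  rewrite /ALG -ge0_integralZl //; last 2 first.
  - by move=> w _; rewrite lee_fin.
  - by rewrite lee_fin invr_ge0 ltW.
  rewrite -ge0_integralZl //; last 2 first.
  - by move=> w _; rewrite lee_fin.
  - by rewrite lee_fin invr_ge0 ltW.
  rewrite -ge0_integralD //; last 4 first.
  - by move=> w _; apply: mule_ge0; rewrite lee_fin // invr_ge0 ltW.
  - exact: measurable_funeM.
  - by move=> w _; apply: mule_ge0; rewrite lee_fin // invr_ge0 ltW.
  - exact: measurable_funeM.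
  have -> : ((2 * L)%:E = \int[P]_(w in [set: Omega]) (cst (2 * L)%:E w))%E.
    rewrite integral_cst //; have hP : (P [set: Omega] = 1)%E by apply: probability_setT.
    by rewrite -[in LHS](mule1 (2 * L)%:E); congr (_ * _)%E; exact: esym hP.
  apply: ge0_le_integral => //.
  - by move=> w _; rewrite lee_fin /= mulr_ge0 // ltW.
  - apply: emeasurable_funD; exact: measurable_funeM.
  move=> w _; rewrite /= -!EFinM -EFinD lee_fin.
  by rewrite [_^-1 * _]mulrC [D2^-1 * _]mulrC; apply: hw.
have [//|hlt] := leP (L%:E) (comp_ratio f a b P pol).
have lt1 := le_lt_trans ub1 hlt; have lt2 := le_lt_trans ub2 hlt.
move: key A1ge A2ge lt1 lt2.
case: (ALG f P pol I1) => [x1| |] //; last first.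
  by move=> _ _ _; rewrite gt0_mulye ?lte_fin ?invr_gt0 // ltNge leey.
case: (ALG f P pol I2) => [x2| |] //; last first.
  by move=> _ _ _ _; rewrite gt0_mulye ?lte_fin ?invr_gt0 // ltNge leey.
rewrite -!EFinM -EFinD !lee_fin !lte_fin => key x1p x2p lt1 lt2.
have h1 : x1 / D1 < L.
  rewrite ltr_pdivrMr //; move: lt1; rewrite ltr_pdivrMr // => h.
  apply: lt_le_trans h _; apply: ler_wpM2l => //; exact: ltW.
have h2 : x2 / D2 < L.
  rewrite ltr_pdivrMr //; move: lt2; rewrite ltr_pdivrMr // => h.
  apply: lt_le_trans h _; apply: ler_wpM2l => //; exact: ltW.
move: key; rewrite [_^-1 * x1]mulrC [_^-1 * x2]mulrC; lra.
Qed.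

Definition only (K n : nat) (k0 : 'I_K.+1) (v : {ffun 'I_n -> nat}) : decision K n :=
  [ffun k => if k == k0 then v else [ffun _ => 0%N]].

Lemma sum_only K n k0 v (i : 'I_n) : (\sum_(k < K.+1) (@only K n k0 v) k i)%N = v i.
Proof.
rewrite (bigD1 k0) //= ffunE eqxx big1 ?addn0 // => k kne.
by rewrite ffunE (negbTE kne) ffunE.
Qed.

Lemma period_cost_only (R : realType) (K : nat) (f : nat -> R) n
  (c : {ffun 'I_K.+1 -> {ffun 'I_n -> R}}) k0 v :
  period_cost _ _ f n c (@only K n k0 v) =
  (if (0 < \sum_(i < n) v i)%N then f k0 else 0) + \sum_(i < n) c k0 i * (v i)%:R.
Proof.
have e : @only K n k0 v k0 = v by rewrite ffunE eqxx.
rewrite /period_cost (bigD1 k0) //= e [X in _ + X]big1 ?addr0 // => k kne.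
have e2 : @only K n k0 v k = [ffun _ => 0%N] by rewrite ffunE (negbTE kne).
rewrite e2; under eq_bigr do rewrite ffunE.
rewrite big1 // /= add0r big1 // => i _; by rewrite ffunE mulr0.
Qed.

Lemma opt_fin (R : realType) (x : \bar R) (r1 r2 : R) :
  (r1%:E <= x)%E -> (x <= r2%:E)%E -> x = (fine x)%:E.
Proof. by case: x. Qed.

Lemma sum_nat_indic n (i : 'I_n) : (\sum_(j < n) nat_of_bool (j == i))%N = 1%N.
Proof.
rewrite (bigD1 i) //= eqxx big1 // => j jne; by rewrite (negbTE jne).
Qed.

Unset Implicit Arguments.

Definition inv1 (K n : nat) (ks : 'I_K.+1) : decision K n :=
  [ffun k => [ffun i => nat_of_bool (k == ks)]].
Definition ccost {R : realType} (K n : nat) (a : R) : {ffun 'I_K.+1 -> {ffun 'I_n -> R}} :=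
  [ffun _ => [ffun _ => a]].
Definition p1 {R : realType} (K n : nat) (a : R) : period_data R K n :=
  ([ffun _ => 1%N], ccost K n a).
Definition qi {R : realType} (K n : nat) (a : R) (i : 'I_n) : period_data R K n :=
  ([ffun j => nat_of_bool (j == i)], ccost K n a).
Definition instA {R : realType} (K n : nat) (a : R) (ks : 'I_K.+1) :=
  @Instance R K n (inv1 K n ks) [:: p1 K n a].
Definition instB {R : realType} (K n : nat) (a : R) (ks : 'I_K.+1) :=
  @Instance R K n (inv1 K n ks) (p1 K n a :: [seq qi K n a i | i <- enum 'I_n]).

Set Implicit Arguments.

Lemma sum_ones n : (\sum_(i < n) [ffun _ : 'I_n => 1%N] i)%N = n.
Proof. by under eq_bigr do rewrite ffunE; rewrite sum_nat_const card_ord muln1. Qed.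

Lemma sum_qi (R : realType) (K n : nat) (a : R) (i : 'I_n) :
  (\sum_(j < n) (qi K n a i).1 j)%N = 1%N.
Proof. by rewrite /qi /=; under eq_bigr do rewrite ffunE; rewrite sum_nat_indic. Qed.

Lemma cnn_cc (R : realType) (K n : nat) (a : R) (v : {ffun 'I_n -> nat}) :
  0 <= a -> @cnn R K n (v, ccost K n a).
Proof. by move=> ha; apply/forallP => k; apply/forallP => i; rewrite !ffunE. Qed.

Lemma cc_valid (R : realType) (K n : nat) (a b : R) :
  a <= b -> [forall k : 'I_K.+1, forall i : 'I_n,
     (a <= ccost K n a k i) && (ccost K n a k i <= b)].
Proof. by move=> hab; apply/forallP => k; apply/forallP => i; rewrite !ffunE lexx. Qed.

Lemma validA (R : realType) (K n : nat) (a b : R) ks :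
  a <= b -> valid_instance a b (instA K n a ks).
Proof. by move=> hab; rewrite /valid_instance /instA /p1 /= andbT; apply: cc_valid. Qed.

Lemma validB (R : realType) (K n : nat) (a b : R) ks :
  a <= b -> valid_instance a b (instB K n a ks).
Proof.
move=> hab; rewrite /valid_instance /instB /p1 /= cc_valid //= all_map.
by apply/allP => i _ /=; apply: cc_valid.
Qed.

Lemma allcnnB (R : realType) (K n : nat) (a : R) :
  0 <= a -> all (@cnn R K n) [seq qi K n a i | i <- enum 'I_n].
Proof. by move=> ha; rewrite all_map; apply/allP => i _ /=; apply: cnn_cc. Qed.

Lemma OPTA_lo (R : realType) (K : nat) (f : nat -> R) n (a : R) ks :
  (forall k : 'I_K.+1, 0 <= f k) ->
  ((a * n%:R)%:E <= OPT f (instA K n a ks))%E.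
Proof.
move=> hf; apply: OPT_ge => plan hp.
have := @first_var R K f n (inv1 K n ks) (p1 K n a) [::] plan a hf hp isT.
rewrite sum_ones; apply => k i; by rewrite /p1 /= !ffunE.
Qed.

Lemma OPTB_lo (R : realType) (K : nat) (f : nat -> R) n (a : R) ks :
  (forall k : 'I_K.+1, 0 <= f k) -> 0 <= a ->
  ((a * n%:R)%:E <= OPT f (instB K n a ks))%E.
Proof.
move=> hf ha; apply: OPT_ge => plan hp.
have := @first_var R K f n (inv1 K n ks) (p1 K n a) _ plan a hf hp (allcnnB K n ha).
rewrite sum_ones; apply => k i; by rewrite /p1 /= !ffunE.
Qed.

Lemma OPTA_hi (R : realType) (K : nat) (f : nat -> R) n (a : R) ks :
  (0 < n)%N ->
  (OPT f (instA K n a ks) <= (f ks + n%:R * a)%:E)%E.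
Proof.
move=> n0.
have hfe : feasible (instA K n a ks) [:: only ks [ffun _ => 1%N]].
  apply: feasible_suff => //=.
    by rewrite andbT; apply/forallP => i; rewrite sum_only.
  move=> k i kp; rewrite big_cons big_nil addn0 !ffunE.
  by case: (k == ks); rewrite ?ffunE.
apply: le_trans (OPT_le f hfe) _.
rewrite /plan_cost /= big_cons big_nil addr0 period_cost_only sum_ones n0.
rewrite lee_fin lerD2l; under eq_bigr do rewrite !ffunE mulr1.
by rewrite sumr_const card_ord mulr_natl.
Qed.

Lemma sum_a_indic (R : realType) n (a : R) (i : 'I_n) :
  \sum_(j < n) a * (nat_of_bool (j == i))%:R = a.
Proof.
rewrite (bigD1 i) //= eqxx mulr1 big1 ?addr0 // => j jne.
by rewrite (negbTE jne) mulr0.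
Qed.

Lemma OPTB_hi (R : realType) (K : nat) (f : nat -> R) n (a : R) (ks : 'I_K.+1) :
  (0 < ks)%N -> (2 <= n)%N -> 0 <= a ->
  (OPT f (instB K n a ks) <= (f 0%N + n%:R * (f ks + n%:R * a))%:E)%E.
Proof.
move=> ksp n2 ha.
have hfe : feasible (instB K n a ks)
   (only ord0 [ffun _ => 1%N] :: [seq only ks (qi K n a i).1 | i <- enum 'I_n]).
  apply: feasible_suff => /=.
  - by rewrite !size_map.
  - rewrite /p1 /=; apply/andP; split.
      by apply/forallP => i; rewrite sum_only.
    rewrite zip_map all_map; apply/allP => i _ /=.
    by apply/forallP => j; rewrite sum_only.
  move=> k i kp; rewrite big_cons big_map big_enum /=.
  have -> : (only ord0 [ffun=> 1%N] k i = 0)%N.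
    rewrite ffunE; case: eqP => [k0|_]; last by rewrite ffunE.
    by move: kp; rewrite k0.
  rewrite add0n !ffunE; under eq_bigr do rewrite ffunE.
  case: (k == ks) => /=; last by rewrite big1 // => j _; rewrite ffunE.
  under eq_bigr do rewrite /qi /= ffunE.
  by rewrite (bigD1 i) //= eqxx big1 // => j jne; rewrite eq_sym (negbTE jne).
apply: le_trans (OPT_le f hfe) _.
rewrite /plan_cost /= big_cons /= period_cost_only sum_ones.
have n0 : (0 < n)%N by apply: leq_trans n2.
rewrite n0 zip_map big_map big_enum /=.
rewrite [X in _ + X](eq_bigr (fun _ => f ks + a)); last first.
  move=> i _ /=; rewrite period_cost_only; under eq_bigr do rewrite ffunE.
  rewrite sum_nat_indic /=; under eq_bigr do rewrite !ffunE.
  by rewrite sum_a_indic.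
under eq_bigr do rewrite !ffunE mulr1.
rewrite !sumr_const !card_ord lee_fin -[a *+ n]mulr_natl -[(f ks + a) *+ n]mulr_natl.
have hn : (2 : R) <= n%:R by rewrite (ler_nat R 2 n).
have h2 : n%:R * a + n%:R * a <= n%:R * (n%:R * a).
  have : 0 <= (n%:R - 2) * (n%:R * a) by apply: mulr_ge0; [lra | apply: mulr_ge0].
  lra.
rewrite mulrDr; lra.
Qed.

Lemma costA_ge (R : realType) (K : nat) (f : nat -> R) n (a b : R) (ks : 'I_K.+1)
    (pol : policy R K) :
  (forall k : 'I_K.+1, 0 <= f k) -> 0 <= a -> a <= b -> feasible_policy a b pol ->
  0 <= plan_cost f (instA K n a ks) (run pol (instA K n a ks)) /\
  ((0 < \sum_(i < n) pol n (inv1 K n ks) [:: p1 K n a] ord0 i)%N ->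
     f 0%N <= plan_cost f (instA K n a ks) (run pol (instA K n a ks))).
Proof.
move=> hf ha hab hpol.
have hv : valid_instance a b (instA K n a ks) by apply: validA.
have hfe := hpol _ hv.
have [r hr] := @run_cons R K pol n (inv1 K n ks) (p1 K n a) [::].
rewrite /instA in hfe *; rewrite hr in hfe *.
have -> : plan_cost f (@Instance R K n (inv1 K n ks) [:: p1 K n a])
    (pol n (inv1 K n ks) [:: p1 K n a] :: r)
  = cost_list f [:: p1 K n a] (pol n (inv1 K n ks) [:: p1 K n a] :: r) by [].
rewrite cost_list_cons cost_list_nil addr0.
have hc : forall k i, 0 <= (p1 K n a).2 k i by move=> k i; rewrite /p1 /= !ffunE.
split; first exact: period_cost_ge0.
by move=> hpos; apply: (period_cost_fixed (k0 := ord0)).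
Qed.

Lemma costB_ge (R : realType) (K : nat) (f : nat -> R) n (a b : R) (ks : 'I_K.+1)
    (pol : policy R K) :
  (forall k : 'I_K.+1, 0 <= f k) -> 0 <= a -> a <= b -> feasible_policy a b pol ->
  0 <= plan_cost f (instB K n a ks) (run pol (instB K n a ks)) /\
  (~~ (0 < \sum_(i < n) pol n (inv1 K n ks) [:: p1 K n a] ord0 i)%N ->
     f 0%N * n%:R <= plan_cost f (instB K n a ks) (run pol (instB K n a ks))).
Proof.
move=> hf ha hab hpol.
have hv : valid_instance a b (instB K n a ks) by apply: validB.
have hfe := hpol _ hv.
set ps := [seq qi K n a i | i <- enum 'I_n].
have [r hr] := @run_cons R K pol n (inv1 K n ks) (p1 K n a) ps.
rewrite /instB -/ps in hfe *; rewrite hr in hfe *.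
set m := pol n (inv1 K n ks) [:: p1 K n a] in hr hfe *.
have -> : plan_cost f (@Instance R K n (inv1 K n ks) (p1 K n a :: ps)) (m :: r)
  = cost_list f (p1 K n a :: ps) (m :: r) by [].
rewrite cost_list_cons.
have hc : forall k i, 0 <= (p1 K n a).2 k i by move=> k i; rewrite /p1 /= !ffunE.
have hps := allcnnB K n ha.
have h0 := @period_cost_ge0 R K f n (p1 K n a).2 m hf hc.
split; first by apply: addr_ge0 => //; apply: cost_list_ge0.
move=> hnpos.
have hz : forall i, m ord0 i = 0%N.
  move: hnpos; rewrite lt0n negbK sum_nat_eq0 => /forallP hz i.
  by apply/eqP; apply: hz.
have /feasible_cons [m' [plan' [e hsum hle hfe']]] := hfe.
case: e => em er; rewrite -em -er in hsum hle hfe'.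
have hinv : forall (k : 'I_K.+1) (i : 'I_n), (0 < k)%N ->
    [ffun k => [ffun i => (inv1 K n ks k i - m k i)%N]] k i = 0%N.
  move=> k i kp; rewrite !ffunE.
  have hs := hsum i; rewrite /p1 /= ffunE (bigD1 ks) //= big1 ?addn0 in hs; last first.
    move=> k' k'ne; have [->|kn0] := eqVneq k' ord0; first exact: hz.
    have k'p : (0 < k')%N by rewrite lt0n; apply: contra kn0 => /eqP h; apply/eqP/val_inj.
    by have := hle k' i k'p; rewrite !ffunE (negbTE k'ne) leqn0 => /eqP.
  by have [->|kne] := eqVneq k ks; rewrite ?hs.
have := zero_inv_cost hf hinv hps hfe'.
have -> : count (fun p : period_data R K n => (0 < \sum_(i < n) p.1 i)%N) ps = n.
  rewrite count_map (@eq_count _ _ predT) ?count_predT ?size_enum_ord // => i /=.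
  by rewrite /qi /=; under eq_bigr do rewrite ffunE; rewrite sum_nat_indic.
lra.
Qed.

Lemma third_term (R : realType) (K : nat) (f : nat -> R) (a b : R)
    (d : measure_display) (Omega : measurableType d) (P : probability Omega R)
    (pol : Omega -> policy R K) (n : nat) (ks : 'I_K.+1) :
  (forall k : 'I_K.+1, 0 <= f k) -> (0 < ks)%N -> (2 <= n)%N -> 0 < a -> a <= b ->
  (forall w, feasible_policy a b (pol w)) ->
  (forall I : instance R K, valid_instance a b I ->
     measurable_fun [set: Omega] (fun w : Omega => (plan_cost f I (run (pol w) I))%:E)) ->
  ((4^-1 * Num.min (n%:R) (f 0%N / (f ks + n%:R * a)))%:E <= comp_ratio f a b P pol)%E.
Proof.
move=> hf ksp n2 ha hab hpol hmeas.
have hn : (2:R) <= n%:R by rewrite (ler_nat R 2 n).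
have fks : 0 <= f ks := hf ks.
have f0 : 0 <= f 0%N := hf ord0.
have anp : 0 < a * n%:R by apply: mulr_gt0 => //; lra.
set g := f ks + n%:R * a.
have gp : 0 < g by rewrite /g; lra.
have vA : valid_instance a b (instA K n a ks) by apply: validA.
have vB : valid_instance a b (instB K n a ks) by apply: validB.
have loA : ((a * n%:R)%:E <= OPT f (instA K n a ks))%E by apply: OPTA_lo.
have hiA : (OPT f (instA K n a ks) <= g%:E)%E by apply: OPTA_hi; lia.
have loB : ((a * n%:R)%:E <= OPT f (instB K n a ks))%E by apply: OPTB_lo => //; exact: ltW.
have hiB : (OPT f (instB K n a ks) <= (f 0%N + n%:R * g)%:E)%E
  by apply: OPTB_hi => //; exact: ltW.
have eA := opt_fin loA hiA; have eB := opt_fin loB hiB.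
rewrite eA lee_fin in loA hiA; rewrite eB lee_fin in loB hiB.
set m0 := Num.min _ _.
have m0n : m0 <= n%:R by rewrite /m0 ge_min lexx.
have m0X : m0 <= f 0%N / g by rewrite /m0 ge_min lexx orbT.
have m0ge : 0 <= m0 by rewrite /m0 le_min; apply/andP; split; [lra | apply: divr_ge0 => //; lra].
have m0g : m0 * g <= f 0%N by rewrite -ler_pdivlMr.
apply: (combine (D1 := g) (D2 := f 0%N + n%:R * g) P vA vB eA eB) => //.
- exact: lt_le_trans anp loA.
- exact: lt_le_trans anp loB.
- by move=> w; apply: hmeas.
- by move=> w; apply: hmeas.
- by move=> w; have [] := costA_ge n ks hf (ltW ha) hab (hpol w).
- by move=> w; have [] := costB_ge n ks hf (ltW ha) hab (hpol w).
move=> w.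
have [cA0 cA1] := costA_ge n ks hf (ltW ha) hab (hpol w).
have [cB0 cB1] := costB_ge n ks hf (ltW ha) hab (hpol w).
set cA := plan_cost f _ _ in cA0 cA1 *.
set cB := plan_cost f _ _ in cB0 cB1 *.
have Dp : 0 < f 0%N + n%:R * g by apply: ltr_wpDl => //; apply: mulr_gt0 => //; lra.
have qA : 0 <= cA / g by apply: divr_ge0 => //; exact: ltW.
have qB : 0 <= cB / (f 0%N + n%:R * g) by apply: divr_ge0 => //; exact: ltW.
case: (boolP (0 < \sum_(i < n) pol w n (inv1 K n ks) [:: p1 K n a] ord0 i)%N) => hpos.
- have h1 := cA1 hpos.
  have : m0 <= cA / g.
    apply: le_trans m0X _; apply: ler_wpM2r; [rewrite invr_ge0; exact: ltW | exact: h1].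
  lra.
- have h2 := cB1 hpos.
  have : m0 / 2 <= cB / (f 0%N + n%:R * g).
    rewrite ler_pdivlMr // mulrAC ler_pdivrMr //.
    apply: le_trans (_ : f 0%N * n%:R * 2 <= _); last first.
      by apply: ler_wpM2r => //.
    have e1 : 0 <= (n%:R - m0) * f 0%N by apply: mulr_ge0 => //; lra.
    have e2 : 0 <= n%:R * (f 0%N - m0 * g) by apply: mulr_ge0; lra.
    nra.
  lra.
Qed.

Definition invN (K N : nat) : decision K 1 := [ffun _ => [ffun _ => N]].

Lemma ite_le (R : realType) (x : R) (c : bool) : 0 <= x -> (if c then x else 0) <= x.
Proof. by case: c. Qed.

Lemma inst1_cost (R : realType) (K : nat) (f : nat -> R) (N : nat)
    (c1 c2 : {ffun 'I_K.+1 -> {ffun 'I_1 -> R}}) plan (j : 'I_K.+1) :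
  (forall k : 'I_K.+1, 0 <= f k) -> (forall k i, 0 <= c2 k i) -> (0 < j)%N ->
  feasible (@Instance R K 1 (invN K N) [:: ([ffun _ => N], c1); ([ffun _ => N], c2)]) plan ->
  exists m m' : decision K 1, [/\ plan = [:: m; m'],
    (\sum_(k < K.+1) m k ord0 = N)%N, (\sum_(k < K.+1) m' k ord0 = N)%N,
    (m' j ord0 + m j ord0 <= N)%N &
    \sum_(k < K.+1) c1 k ord0 * (m k ord0)%:R + \sum_(k < K.+1) c2 k ord0 * (m' k ord0)%:R
      <= plan_cost f (@Instance R K 1 (invN K N) [:: ([ffun _ => N], c1); ([ffun _ => N], c2)]) plan].
Proof.
move=> hf hc2 jp hfe.
have /feasible_cons [m [pl [e1 s1 l1 f1]]] := hfe.
have /feasible_cons [m' [pl' [e2 s2 l2 f2]]] := f1.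
subst plan pl; clear hfe f1; case: pl' f2 => [_|? ?] //=.
have s1' : (\sum_(k < K.+1) m k ord0 = N)%N by rewrite s1 /= ffunE.
have s2' : (\sum_(k < K.+1) m' k ord0 = N)%N by rewrite s2 /= ffunE.
exists m, m'; split => //.
- have := l2 j ord0 jp; have := l1 j ord0 jp; rewrite !ffunE.
  have : (m j ord0 <= N)%N.
    by rewrite -[X in (_ <= X)%N]s1' (bigD1 j) //= leq_addr.
  by move=> h1 _ h2; rewrite addnC -leq_subRL.
have -> : plan_cost f (@Instance R K 1 (invN K N) [:: ([ffun _ => N], c1); ([ffun _ => N], c2)])
  [:: m; m'] = cost_list f [:: ([ffun _ => N], c1); ([ffun _ => N], c2)] [:: m; m'] by [].
rewrite !cost_list_cons cost_list_nil addr0.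
apply: lerD; (apply: le_trans; last exact: period_cost_var);
  by apply: ler_sum => k _; rewrite big_ord1.
Qed.

Lemma OPT1_hi (R : realType) (K : nat) (f : nat -> R) (a : R) (N : nat)
    (c1 c2 : {ffun 'I_K.+1 -> {ffun 'I_1 -> R}}) (j j' : 'I_K.+1) :
  (forall k : 'I_K.+1, 0 <= f k) -> j != j' ->
  c1 j' ord0 = a -> c2 j ord0 = a ->
  (OPT f (@Instance R K 1 (invN K N) [:: ([ffun _ => N], c1); ([ffun _ => N], c2)])
     <= (2 * a * N%:R + (f j + f j'))%:E)%E.
Proof.
move=> hf jj' e1 e2.
have hfe : feasible (@Instance R K 1 (invN K N) [:: ([ffun _ => N], c1); ([ffun _ => N], c2)])
   [:: only j' [ffun _ => N]; only j [ffun _ => N]].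
  apply: feasible_suff => //=.
    by rewrite andbT; apply/andP; split; apply/forallP => i; rewrite sum_only.
  move=> k i kp; rewrite !big_cons big_nil addn0 !ffunE.
  case: (eqVneq k j') => [->|kj'].
    by rewrite eq_sym (negbTE jj') !ffunE addn0.
  by case: (k == j); rewrite !ffunE.
apply: le_trans (OPT_le f hfe) _.
rewrite /plan_cost /= !big_cons big_nil addr0 !period_cost_only !big_ord1 e1 e2 lee_fin.
have := ite_le (0 < N)%N (hf j); have := ite_le (0 < N)%N (hf j').
rewrite !ffunE; lra.
Qed.

Lemma sum_c1 (R : realType) (K : nat) (a b : R) (x : 'I_K.+1 -> R) (k1 k2 : 'I_K.+1) :
  k1 != k2 ->
  \sum_(k < K.+1) (if (k == k1) || (k == k2) then a else b) * x k
  = b * \sum_(k < K.+1) x k - (b - a) * (x k1 + x k2).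
Proof.
move=> k12.
rewrite (eq_bigr (fun k => b * x k - (b - a) * (if (k == k1) || (k == k2) then x k else 0))); last first.
  by move=> k _; case: ifP => _; ring.
rewrite sumrB -!mulr_sumr; congr (_ - _ * _).
rewrite (bigD1 k1) //= eqxx /= (bigD1 k2) /=; last by rewrite eq_sym.
rewrite eqxx orbT big1 ?addr0 // => k /andP [h1 h2].
by rewrite (negbTE h1) (negbTE h2).
Qed.

Lemma sum_c2 (R : realType) (K : nat) (a b : R) (x : 'I_K.+1 -> R) (j : 'I_K.+1) :
  \sum_(k < K.+1) (if k == j then a else b) * x k
  = b * \sum_(k < K.+1) x k - (b - a) * x j.
Proof.
rewrite (eq_bigr (fun k => b * x k - (b - a) * (if k == j then x k else 0))); last first.
  by move=> k _; case: ifP => _; ring.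
rewrite sumrB -!mulr_sumr; congr (_ - _ * _).
rewrite (bigD1 j) //= eqxx big1 ?addr0 // => k h.
by rewrite (negbTE h).
Qed.

Lemma final_arith (R : realType) (a b L F Nr x1 x2 y1 y2 C1 C2 : R) :
  0 < a -> a < b ->
  2 * L * F < Nr * (3 * a + b - 4 * a * L) ->
  x1 + x2 <= Nr -> y1 + x1 <= Nr -> y2 + x2 <= Nr ->
  b * Nr - (b - a) * (x1 + x2) + (b * Nr - (b - a) * y1) <= C1 ->
  b * Nr - (b - a) * (x1 + x2) + (b * Nr - (b - a) * y2) <= C2 ->
  2 * L * (2 * a * Nr + F) <= C1 + C2.
Proof.
move=> ha hab hN hx hm hn h1 h2.
have ba : 0 <= b - a by lra.
have q1 := ler_wpM2l ba hx; have q2 := ler_wpM2l ba hm; have q3 := ler_wpM2l ba hn.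
rewrite !mulrDr in q1 q2 q3.
lra.
Qed.

Lemma first_term (R : realType) (K : nat) (f : nat -> R) (a b : R)
    (d : measure_display) (Omega : measurableType d) (P : probability Omega R)
    (pol : Omega -> policy R K) :
  (2 <= K)%N -> (forall k : 'I_K.+1, 0 <= f k) -> 0 < a -> a < b ->
  (forall w, feasible_policy a b (pol w)) ->
  (forall I : instance R K, valid_instance a b I ->
     measurable_fun [set: Omega] (fun w : Omega => (plan_cost f I (run (pol w) I))%:E)) ->
  ((Num.max 1 (b / (4 * a)))%:E <= comp_ratio f a b P pol)%E.
Proof.
move=> K2 hf ha hab hpol hmeas.
have h1 : (1 < K.+1)%N by lia.
have h2 : (2 < K.+1)%N by lia.
pose k1 : 'I_K.+1 := Ordinal h1.
pose k2 : 'I_K.+1 := Ordinal h2.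
have k12 : k1 != k2 by apply/eqP => /(congr1 val).
have k1p : (0 < k1)%N by []. have k2p : (0 < k2)%N by [].
set L := Num.max 1 (b / (4 * a)).
have ab4 : 0 < 4 * a by lra.
have [L1 Ld] : 1 <= L /\ 3 * a + b - 4 * a * L > 0.
  split; first by rewrite /L le_max lexx.
  have : L < (3 * a + b) / (4 * a).
    rewrite /L gt_max; apply/andP; split.
      by rewrite ltr_pdivlMr // mul1r; lra.
    by rewrite ltr_pM2r ?invr_gt0 //; lra.
  by rewrite ltr_pdivlMr // => h; lra.
set dl := 3 * a + b - 4 * a * L.
set F := f k1 + f k2.
have F0 : 0 <= F by apply: addr_ge0.
pose N := (Num.Def.archi_bound (2 * L * F / dl)).+1.
have hN : 2 * L * F < N%:R * dl.
  rewrite -ltr_pdivrMr //; apply: lt_trans (archi_boundP _) _.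
    by apply: divr_ge0; [apply: mulr_ge0 => //; lra | exact: ltW].
  by rewrite ltr_nat.
have Npos : 0 < N%:R :> R by rewrite ltr0n.
pose c1 : {ffun 'I_K.+1 -> {ffun 'I_1 -> R}} :=
  [ffun k => [ffun _ => if (k == k1) || (k == k2) then a else b]].
pose c2 (j : 'I_K.+1) : {ffun 'I_K.+1 -> {ffun 'I_1 -> R}} :=
  [ffun k => [ffun _ => if k == j then a else b]].
pose I (j : 'I_K.+1) := @Instance R K 1 (invN K N)
  [:: ([ffun _ => N], c1); ([ffun _ => N], c2 j)].
have hc2 : forall j k i, 0 <= c2 j k i by move=> j k i; rewrite !ffunE; case: ifP; lra.
have vI : forall j, valid_instance a b (I j).
  move=> j; rewrite /valid_instance /= andbT; apply/andP; split;
  apply/forallP => k; apply/forallP => i; rewrite !ffunE; case: ifP => _; apply/andP; lra.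
have lo : forall j, ((a * N%:R)%:E <= OPT f (I j))%E.
  move=> j; apply: OPT_ge => plan hp.
  have := @first_var R K f 1 (invN K N) ([ffun _ => N], c1) [:: ([ffun _ => N], c2 j)] plan a hf hp.
  rewrite big_ord1 ffunE; apply.
    by rewrite /= andbT; apply/forallP => k; apply/forallP => i; apply: hc2.
  by move=> k i; rewrite /= !ffunE; case: ifP => _; lra.
set D := 2 * a * N%:R + F.
have hi1 : (OPT f (I k1) <= D%:E)%E.
  apply: OPT1_hi => //; rewrite !ffunE ?eqxx ?orbT //.
have hi2 : (OPT f (I k2) <= D%:E)%E.
  rewrite /D /F addrC [f k1 + _]addrC addrC.
  apply: OPT1_hi => //; rewrite ?eq_sym // !ffunE ?eqxx ?orbT //.
have e1 := opt_fin (lo k1) hi1; have e2 := opt_fin (lo k2) hi2.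
have lo1 := lo k1; have lo2 := lo k2.
rewrite e1 lee_fin in lo1 hi1; rewrite e2 lee_fin in lo2 hi2.
have anp : 0 < a * N%:R by apply: mulr_gt0.
apply: (combine (D1 := D) (D2 := D) P (vI k1) (vI k2) e1 e2) => //.
- exact: lt_le_trans anp lo1.
- exact: lt_le_trans anp lo2.
- by move=> w; apply: hmeas.
- by move=> w; apply: hmeas.
- move=> w; apply: cost_list_ge0 => //=.
  by rewrite andbT; apply/andP; split; apply/forallP => k; apply/forallP => i;
     rewrite !ffunE; case: ifP => _; lra.
- move=> w; apply: cost_list_ge0 => //=.
  by rewrite andbT; apply/andP; split; apply/forallP => k; apply/forallP => i;
     rewrite !ffunE; case: ifP => _; lra.
move=> w.
have [r1 hr1] := @run_cons R K (pol w) 1 (invN K N) ([ffun _ => N], c1) [:: ([ffun _ => N], c2 k1)].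
have [r2 hr2] := @run_cons R K (pol w) 1 (invN K N) ([ffun _ => N], c1) [:: ([ffun _ => N], c2 k2)].
have [m [m' [em sm sm' hm hc]]] := inst1_cost hf (hc2 k1) k1p (hpol w _ (vI k1)).
have [n2 [n2' [en sn sn' hn hc']]] := inst1_cost hf (hc2 k2) k2p (hpol w _ (vI k2)).
rewrite /I in em hc en hc' *.
rewrite hr1 in em hc *; rewrite hr2 in en hc' *.
case: em => em _; case: en => en _.
subst m n2.
set m := pol w _ _ _ in hc hc' hm hn sm *.
set C1 := plan_cost f (@Instance R K 1 (invN K N) [:: ([ffun _ => N], c1); ([ffun _ => N], c2 k1)]) _ in hc *.
set C2 := plan_cost f (@Instance R K 1 (invN K N) [:: ([ffun _ => N], c1); ([ffun _ => N], c2 k2)]) _ in hc' *.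
have E1 : \sum_(k < K.+1) c1 k ord0 * (m k ord0)%:R
    = b * N%:R - (b - a) * ((m k1 ord0)%:R + (m k2 ord0)%:R).
  rewrite (eq_bigr (fun k => (if (k == k1) || (k == k2) then a else b) * (m k ord0)%:R)); last first.
    by move=> k _; rewrite !ffunE.
  by rewrite sum_c1 // -natr_sum sm.
have E2 : forall (j : 'I_K.+1) (mm : decision K 1), (\sum_(k < K.+1) mm k ord0 = N)%N ->
    \sum_(k < K.+1) c2 j k ord0 * (mm k ord0)%:R = b * N%:R - (b - a) * (mm j ord0)%:R.
  move=> j mm smm.
  rewrite (eq_bigr (fun k => (if k == j then a else b) * (mm k ord0)%:R)); last first.
    by move=> k _; rewrite !ffunE.
  by rewrite sum_c2 // -natr_sum smm.
rewrite E1 (E2 _ _ sm') in hc; rewrite E1 (E2 _ _ sn') in hc'.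
have hx : (m k1 ord0 + m k2 ord0 <= N)%N.
  rewrite -[X in (_ <= X)%N]sm (bigD1 k1) //= (bigD1 k2) //=.
  by rewrite addnA leq_addr.
move: hx hm hn; rewrite -!(ler_nat R) !natrD.
have Dp : 0 < D by rewrite /D; have := mulr_gt0 ab4 Npos; lra.
rewrite -mulrDl ler_pdivlMr // mulrC /D.
move: hN hc hc' Npos; clearbody N; rewrite /dl.
move=> hN hc hc' Npos hx hm hn.
rewrite [X in X <= _]mulrC; exact: final_arith ha hab hN hx hm hn hc hc'.
Qed.

Lemma exists_argmin (R : realType) (K : nat) (f : nat -> R) :
  (2 <= K)%N ->
  exists ks : 'I_K.+1, (0 < ks)%N /\ f ks = \big[Num.min/f 1%N]_(1 <= k < K.+1) f k.
Proof.
move=> K2.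
have h1 : (1 < K.+1)%N by lia.
pose Q (y : R) := exists ks : 'I_K.+1, (0 < ks)%N /\ f ks = y.
suff : Q (\big[Num.min/f 1%N]_(1 <= k < K.+1) f k) by [].
rewrite big_nat_cond; apply: big_ind.
- by exists (Ordinal h1).
- move=> x y [kx [kxp ex]] [ky [kyp ey]].
  by rewrite /Order.min; case: ifP => _; [exists kx | exists ky].
- move=> i /andP [/andP [i1 iK] _].
  by exists (Ordinal iK); split.
Qed.

Unset Implicit Arguments.
Unset Strict Implicit.

Theorem theorem2 (R : realType) (K : nat) (f : nat -> R) (a b : R)
    (d : measure_display) (Omega : measurableType d) (P : probability Omega R)
    (pol : Omega -> policy R K) :
  (2 <= K)%N ->
  (forall k, (k <= K)%N -> 0 <= f k) ->
  0 < a -> a < b ->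
  (forall w, feasible_policy a b (pol w)) ->
  (forall I : instance R K, valid_instance a b I ->
     measurable_fun [set: Omega] (fun w : Omega => (plan_cost f I (run (pol w) I))%:E)) ->
  ((lower_bound K f a b)%:E <= comp_ratio f a b P pol)%E.
Proof.
move=> K2 hf0 ha hab hpol hmeas.
have hf : forall k : 'I_K.+1, 0 <= f k by move=> k; apply: hf0; rewrite -ltnS ltn_ord.
have T1 := first_term P K2 hf ha hab hpol hmeas.
have [ks [ksp hks]] := exists_argmin f K2.
have T3 : forall n, (2 <= n)%N ->
    ((4^-1 * Num.min (n%:R) (f 0%N / (f ks + n%:R * a)))%:E <= comp_ratio f a b P pol)%E.
  by move=> n n2; apply: third_term => //; exact: ltW.
rewrite /lower_bound -hks.
case E: (comp_ratio f a b P pol) T1 T3 => [c| |] T1 T3.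
- rewrite lee_fin in T1; rewrite lee_fin.
  move: T1; rewrite !ge_max => /andP [c1 c2]; rewrite c1 c2 /=.
  rewrite -ler_pdivlMl; last by lra.
  apply: ge_sup.
    by exists (Num.min (2%:R) (f 0%N / (f ks + 2%:R * a))); exists 2%N.
  move=> _ [n hn <-]; have := T3 n hn; rewrite lee_fin.
  by rewrite -ler_pdivlMl ?invr_gt0 //; lra.
- by rewrite leey.
- by move: T1; rewrite leeNy_eq.
Qed.
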